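(* For every $l\in\mathbb N$, the real curve $\Gamma_l(\mathbb R)=\{(\lambda,\mu)\in\mathbb R^2:P_l(\lambda,\mu^2)=0\}$ has no ovals in the affine plane $\mathbb R^2_{(\lambda,\mu)}$, and (its projective closure) has no ovals contained in the closure of the half-plane $\{\mu>0\}$ in the projective plane $\mathbb{RP}^2\supset\mathbb R^2_{(\lambda,\mu)}$.
   Context: For $l\in\mathbb N$ and $\mu\in\mathbb C$, $H_l$ is the tridiagonal $l\times l$ matrix with entries $H_{l;jj}=(1-j)(l-j+1)$, $H_{l;j,j+1}=\mu j$, $H_{l;j,j-1}=\mu(l-j+1)$, and $H_{l;ij}=0$ if $|i-j|\geq 2$; $\det(H_l+\lambda\,\mathrm{Id})$ is a polynomial of degree $l$ in $(\lambda,\mu^2)$, written $P_l(\lambda,\mu^2)$. An oval of a real planar projective algebraic curve $\Gamma$ is a subset of $\Gamma$ that is analytically parametrized by a circle, the parametrization being bijective except possibly at singular points of the curve (an oval may contain singular points, and the parametrization may have zero derivative at some of them). *)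

(* Defs.v *)
From Stdlib Require Import Reals.
From mathcomp Require Import all_boot all_algebra.
From mathcomp Require Import Rstruct.

Set Implicit Arguments.
Unset Strict Implicit.
Unset Printing Implicit Defensive.

Import GRing.Theory.
Local Open Scope ring_scope.

(* H_l (mu) : l x l tridiagonal; MathComp index i : 'I_l corresponds to the
   paper's index j = i+1.
   H_{jj} = (1-j)(l-j+1) = -i (l-i),
   H_{j,j+1} = mu j = mu (i+1)      (entry (i, i+1)),
   H_{j,j-1} = mu (l-j+1) = mu (l-i) (entry (i, i-1)). *)
Definition Hmat (l : nat) (mu : R) : 'M[R]_l :=
  \matrix_(i < l, k < l)
    (if (k == i :> nat) then (- (i%:R) * (l%:R - i%:R))%R
     else if (k == i.+1 :> nat) then (mu * (i.+1)%:R)%R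
     else if (i == k.+1 :> nat) then (mu * (l%:R - i%:R))%R
     else 0%R).

(* Fdet l lam mu = det (H_l + lam Id) = P_l(lam, mu^2). *)
Definition Fdet (l : nat) (lam mu : R) : R :=
  \det (Hmat l mu + lam%:M)%R.

(* Homogenization of Fdet l in (x : y : z), with lam = x/z, mu = y/z:
   det (x Id + y A + z D) where A is the off-diagonal part (coefficient of mu)
   and D the diagonal part of H_l.  It is homogeneous of degree l and
   Ghom l lam mu 1 = Fdet l lam mu; since its leading form det(x Id + y A) is
   nonzero, this is the homogenization of P_l(lam, mu^2) (of total degree l),
   i.e. the defining polynomial of the projective closure of Gamma_l. *)
Definition Ghom (l : nat) (x y z : R) : R :=
  \det (\matrix_(i < l, k < l)
    (if (k == i :> nat) then (x + z * (- (i%:R) * (l%:R - i%:R)))%R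
     else if (k == i.+1 :> nat) then (y * (i.+1)%:R)%R
     else if (i == k.+1 :> nat) then (y * (l%:R - i%:R))%R
     else 0%R) : 'M[R]_l).

Local Close Scope ring_scope.
Local Open Scope R_scope.

Definition real_analytic (f : R -> R) : Prop :=
  forall t0 : R, exists (a : nat -> R) (r : R), 0 < r /\
    forall t : R, Rabs (t - t0) < r ->
      Un_cv (fun N => sum_f_R0 (fun n => a n * (t - t0) ^ n) N) (f t).

Definition on_affine_curve (l : nat) (lam mu : R) : Prop := Fdet l lam mu = 0.

Definition affine_singular (l : nat) (lam mu : R) : Prop :=
  Fdet l lam mu = 0 /\
  derivable_pt_lim (fun s => Fdet l s mu) lam 0 /\
  derivable_pt_lim (fun s => Fdet l lam s) mu 0.

(* The circle is R/Z; a parametrization is a 1-periodic pair (u, v) of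
   real-analytic functions; it is bijective from [0,1) onto its image except
   possibly over singular points, and the image is not a single point. *)
Definition affine_oval (l : nat) (O : R -> R -> Prop) : Prop :=
  exists u v : R -> R,
    real_analytic u /\ real_analytic v /\
    (forall t, u (t + 1) = u t /\ v (t + 1) = v t) /\
    (forall lam mu, O lam mu <-> exists t, 0 <= t < 1 /\ u t = lam /\ v t = mu) /\
    (forall t, on_affine_curve l (u t) (v t)) /\
    (exists s t, (u s, v s) <> (u t, v t)) /\
    (forall s t, 0 <= s < 1 -> 0 <= t < 1 -> s <> t ->
       u s = u t -> v s = v t -> affine_singular l (u s) (v s)).

(* points of RP^2 are nonzero triples (x,y,z) up to nonzero scaling;
   the affine chart is (lam, mu) |-> (lam : mu : 1). *)
Definition nonzero3 (x y z : R) : Prop := ~ (x = 0 /\ y = 0 /\ z = 0).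

Definition proj_eq (x y z x' y' z' : R) : Prop :=
  y * z' - z * y' = 0 /\ z * x' - x * z' = 0 /\ x * y' - y * x' = 0.

Definition on_proj_curve (l : nat) (x y z : R) : Prop := Ghom l x y z = 0.

Definition proj_singular (l : nat) (x y z : R) : Prop :=
  Ghom l x y z = 0 /\
  derivable_pt_lim (fun s => Ghom l s y z) x 0 /\
  derivable_pt_lim (fun s => Ghom l x s z) y 0 /\
  derivable_pt_lim (fun s => Ghom l x y s) z 0.

(* An analytic loop R/Z -> RP^2 is given by a nowhere-zero real-analytic lift
   g = (g1,g2,g3) : R -> R^3 with g(t+1) = g(t) or g(t+1) = -g(t)
   (the latter for one-sided loops).  A projective oval is given by the set of
   representatives (x,y,z) of the points of its image. *)
Definition proj_oval (l : nat) (O : R -> R -> R -> Prop) : Prop :=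
  exists g1 g2 g3 : R -> R,
    real_analytic g1 /\ real_analytic g2 /\ real_analytic g3 /\
    (forall t, nonzero3 (g1 t) (g2 t) (g3 t)) /\
    ((forall t, g1 (t + 1) = g1 t /\ g2 (t + 1) = g2 t /\ g3 (t + 1) = g3 t) \/
     (forall t, g1 (t + 1) = - g1 t /\ g2 (t + 1) = - g2 t /\ g3 (t + 1) = - g3 t)) /\
    (forall x y z, O x y z <->
       nonzero3 x y z /\
       exists t, 0 <= t < 1 /\ proj_eq x y z (g1 t) (g2 t) (g3 t)) /\
    (forall t, on_proj_curve l (g1 t) (g2 t) (g3 t)) /\
    (exists s t, ~ proj_eq (g1 s) (g2 s) (g3 s) (g1 t) (g2 t) (g3 t)) /\
    (forall s t, 0 <= s < 1 -> 0 <= t < 1 -> s <> t ->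
       proj_eq (g1 s) (g2 s) (g3 s) (g1 t) (g2 t) (g3 t) ->
       proj_singular l (g1 s) (g2 s) (g3 s)).

(* Closure in RP^2 of the half-plane {mu > 0} = {y/z > 0}:
   the points with y z >= 0 together with the whole line at infinity z = 0. *)
Definition closed_upper_half (x y z : R) : Prop := z = 0 \/ 0 <= y * z.

(* Main.v *)
Require Import Defs.
From Stdlib Require Import Reals Lra Lia ZArith.
From Coquelicot Require Import Coquelicot.
Local Open Scope R_scope.

Definition dgl (l i : nat) : R := - INR i * (INR l - INR i).
Definition bbt (l k : nat) : R := INR k * (INR l - INR k).
Fixpoint Dt (l k : nat) (x y z : R) {struct k} : R :=
  match k with
  | O => 1
  | S k' => match k' with
            | O => x + z * dgl l 0
            | S k'' => (x + z * dgl l k') * Dt l k' x y z - y * y * bbt l k' * Dt l k'' x y z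
            end
  end.

Fixpoint Dp (l k : nat) (x y z : R) {struct k} : R :=
  match k with
  | O => 0
  | S k' => match k' with
            | O => 1
            | S k'' => Dt l k' x y z + (x + z * dgl l k') * Dp l k' x y z
                       - y * y * bbt l k' * Dp l k'' x y z
            end
  end.

Lemma D_SS l k x y z : Dt l (S (S k)) x y z =
  (x + z * dgl l (S k)) * Dt l (S k) x y z - y * y * bbt l (S k) * Dt l k x y z.
Proof. reflexivity. Qed.

Lemma Dp_SS l k x y z : Dp l (S (S k)) x y z =
  Dt l (S k) x y z + (x + z * dgl l (S k)) * Dp l (S k) x y z
   - y * y * bbt l (S k) * Dp l k x y z.
Proof. reflexivity. Qed.

Lemma dpl_ext (f g : R -> R) x l l' :
  (forall s, f s = g s) -> l = l' -> derivable_pt_lim f x l -> derivable_pt_lim g x l'.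
Proof.
  intros H E Hf eps Heps. destruct (Hf eps Heps) as [d Hd]. exists d.
  intros h Hh Hh'. rewrite <- !H, <- E. apply Hd; assumption.
Qed.

Lemma D_deriv l y z k x : derivable_pt_lim (fun s => Dt l k s y z) x (Dp l k x y z).
Proof.
revert x.
cut (forall x, derivable_pt_lim (fun s => Dt l k s y z) x (Dp l k x y z) /\
        derivable_pt_lim (fun s => Dt l (S k) s y z) x (Dp l (S k) x y z)).
{ intros H x; apply H. }
induction k as [|k IH]; intro x.
- split.
  + simpl. apply derivable_pt_lim_const.
  + eapply dpl_ext; [| |apply (derivable_pt_lim_plus id (fct_cte (z * dgl l 0)) x 1 0);
        [apply derivable_pt_lim_id | apply derivable_pt_lim_const]].
    * intro s; reflexivity.
    * simpl; ring.
- destruct (IH x) as [H1 H2]. split; [exact H2|].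
  eapply dpl_ext; [| | apply (derivable_pt_lim_minus
      ((id + fct_cte (z * dgl l (S k))) * (fun s => Dt l (S k) s y z))%F
      (fct_cte (y * y * bbt l (S k)) * (fun s => Dt l k s y z))%F)].
  + intro s; reflexivity.
  + shelve.
  + apply derivable_pt_lim_mult; [|exact H2].
    apply derivable_pt_lim_plus; [apply derivable_pt_lim_id | apply derivable_pt_lim_const].
  + apply derivable_pt_lim_mult; [apply derivable_pt_lim_const|exact H1].
  Unshelve. rewrite Dp_SS. unfold mult_fct, plus_fct, fct_cte, id. ring.
Qed.

Definition Wf l k x y z := Dp l (S k) x y z * Dt l k x y z - Dt l (S k) x y z * Dp l k x y z.

Lemma Wf_S l k x y z : Wf l (S k) x y z =
  Dt l (S k) x y z * Dt l (S k) x y z + y * y * bbt l (S k) * Wf l k x y z.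
Proof. unfold Wf. rewrite Dp_SS, D_SS. ring. Qed.

Lemma Wf_pos l x y z : y <> 0 -> forall k, (S k <= l)%nat -> Wf l k x y z > 0.
Proof.
intros Hy. induction k as [|k IH]; intro Hk.
- unfold Wf; simpl; lra.
- rewrite Wf_S.
  assert (Hb : bbt l (S k) > 0).
  { unfold bbt. apply Rmult_lt_0_compat.
    - apply lt_0_INR; lia.
    - assert (INR (S k) < INR l) by (apply lt_INR; lia). lra. }
  assert (Hyy : y * y > 0) by (apply Rsqr_pos_lt; exact Hy).
  pose proof (IH ltac:(lia)).
  assert (0 <= Dt l (S k) x y z * Dt l (S k) x y z) by apply Rle_0_sqr.
  assert (y * y * bbt l (S k) * Wf l k x y z > 0).
  { apply Rmult_lt_0_compat; [apply Rmult_lt_0_compat|]; lra. }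
  lra.
Qed.

Lemma root_simple l x y z : (1 <= l)%nat -> y <> 0 -> Dt l l x y z = 0 ->
  Dp l l x y z <> 0 /\ Dt l (pred l) x y z <> 0.
Proof.
intros Hl Hy H0. destruct l as [|m]; [lia|].
pose proof (Wf_pos (S m) x y z Hy m (le_n _)) as HW.
unfold Wf in HW. simpl pred. rewrite H0 in HW.
split; intro E; rewrite E in HW; lra.
Qed.

Lemma Dt_hom l k c x y z : Dt l k (c * x) (c * y) (c * z) = c ^ k * Dt l k x y z.
Proof.
cut (Dt l k (c * x) (c * y) (c * z) = c ^ k * Dt l k x y z /\
     Dt l (S k) (c * x) (c * y) (c * z) = c ^ (S k) * Dt l (S k) x y z).
{ tauto. }
induction k as [|k [IH1 IH2]].
- simpl; split; ring.
- split; [exact IH2|]. rewrite !D_SS, IH1, IH2. simpl. ring.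
Qed.

Lemma Dt_y0 l k x z : Dt l k x 0 z = 0 -> exists i, (i < k)%nat /\ x + z * dgl l i = 0.
Proof.
induction k as [|k IH]; intro H.
- simpl in H; lra.
- assert (E : Dt l (S k) x 0 z = (x + z * dgl l k) * Dt l k x 0 z).
  { destruct k; simpl; ring. }
  rewrite E in H. destruct (Rmult_integral _ _ H) as [H1|H1].
  + exists k; split; [lia|exact H1].
  + destruct (IH H1) as [i [Hi Hi']]. exists i; split; [lia|exact Hi'].
Qed.

Definition DtP l k (p : R * (R * R)) : R := Dt l k (fst p) (fst (snd p)) (snd (snd p)).

Lemma DtP_cont l k p : continuous (DtP l k) p.
Proof.
cut (continuous (DtP l k) p /\ continuous (DtP l (S k)) p). { tauto. }
assert (Cx : continuous (fun q : R * (R * R) => fst q) p).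
{ destruct p; apply continuous_fst. }
assert (Cy : continuous (fun q : R * (R * R) => fst (snd q)) p).
{ apply (continuous_comp (fun q : R * (R * R) => snd q) fst).
  destruct p; apply continuous_snd. destruct p as [a [b c]]; apply continuous_fst. }
assert (Cz : continuous (fun q : R * (R * R) => snd (snd q)) p).
{ apply (continuous_comp (fun q : R * (R * R) => snd q) snd).
  destruct p; apply continuous_snd. destruct p as [a [b c]]; apply continuous_snd. }
induction k as [|k [IH1 IH2]].
- split.
  + apply continuous_const.
  + eapply continuous_ext; [|apply (continuous_plus _ _ p Cx
       (continuous_mult _ _ p Cz (continuous_const (dgl l 0) p)))].
    intro q; reflexivity.
- split; [exact IH2|].
  eapply continuous_ext; [|apply (continuous_minus _ _ p
     (continuous_mult _ _ p (continuous_plus _ _ p Cx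
         (continuous_mult _ _ p Cz (continuous_const (dgl l (S k)) p))) IH2)
     (continuous_mult _ _ p (continuous_mult _ _ p (continuous_mult _ _ p Cy Cy)
         (continuous_const (bbt l (S k)) p)) IH1))].
  intro q; reflexivity.
Qed.

Lemma Dt_cont3 l k x0 y0 z0 eps : eps > 0 -> exists d, d > 0 /\
  forall x y z, Rabs (x - x0) < d -> Rabs (y - y0) < d -> Rabs (z - z0) < d ->
  Rabs (Dt l k x y z - Dt l k x0 y0 z0) < eps.
Proof.
intros He.
pose proof (DtP_cont l k (x0, (y0, z0))) as C.
unfold continuous in C. rewrite filterlim_locally in C.
destruct (C (mkposreal eps He)) as [d Hd].
exists d; split; [apply cond_pos|].
intros x y z H1 H2 H3.
apply (Hd (x, (y, z))). split; [exact H1|split; [exact H2|exact H3]].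
Qed.

Lemma uniq_interval l a b y z :
  (1 <= l)%nat -> a < b ->
  (forall s, a <= s <= b -> y <> 0 /\ Dt l (pred l) s y z <> 0) ->
  Dt l l a y z = 0 -> Dt l l b y z = 0 -> False.
Proof.
intros Hl Hab Hs Ha Hb. destruct l as [|m]; [lia|]. simpl pred in Hs.
set (F := fun s => Dt (S m) (S m) s y z / Dt (S m) m s y z).
set (F' := fun s => Wf (S m) m s y z / (Dt (S m) m s y z)²).
destruct (MVT_cor2 F F' a b Hab) as [c [Hc1 Hc2]].
- intros c Hc. destruct (Hs c Hc) as [Hy Hd].
  eapply dpl_ext; [| |apply (derivable_pt_lim_div (fun s => Dt (S m) (S m) s y z)
     (fun s => Dt (S m) m s y z) c _ _ (D_deriv _ _ _ _ _) (D_deriv _ _ _ _ _) Hd)].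
  + intro s; reflexivity.
  + unfold F', Wf; cbv beta; unfold Rdiv; ring.
- unfold F in Hc1. rewrite Ha, Hb in Hc1.
  assert (Hc : a <= c <= b) by lra.
  destruct (Hs c Hc) as [Hy Hd].
  pose proof (Wf_pos (S m) c y z Hy m (le_n _)) as HW.
  assert (Hsq : (Dt (S m) m c y z)² > 0) by (apply Rsqr_pos_lt; exact Hd).
  assert (F' c > 0) by (unfold F'; apply Rdiv_lt_0_compat; lra).
  assert (F' c * (b - a) > 0) by (apply Rmult_lt_0_compat; lra).
  unfold Rdiv in Hc1. lra.
Qed.

Lemma local_uniq l x0 y0 z0 : (1 <= l)%nat -> y0 <> 0 -> Dt l l x0 y0 z0 = 0 ->
  exists d, d > 0 /\ forall a b y z, Rabs (a - x0) < d -> Rabs (b - x0) < d ->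
    Rabs (y - y0) < d -> Rabs (z - z0) < d ->
    Dt l l a y z = 0 -> Dt l l b y z = 0 -> a = b.
Proof.
intros Hl Hy0 H0.
destruct (root_simple l x0 y0 z0 Hl Hy0 H0) as [_ Hc].
destruct (Dt_cont3 l (pred l) x0 y0 z0 (Rabs (Dt l (pred l) x0 y0 z0)) (Rabs_pos_lt _ Hc))
  as [d1 [Hd1 Hd1']].
exists (Rmin d1 (Rabs y0)). split.
{ apply Rmin_pos; [lra|apply Rabs_pos_lt; exact Hy0]. }
assert (key : forall a b y z, a < b -> Rabs (a - x0) < Rmin d1 (Rabs y0) ->
    Rabs (b - x0) < Rmin d1 (Rabs y0) ->
    Rabs (y - y0) < Rmin d1 (Rabs y0) -> Rabs (z - z0) < Rmin d1 (Rabs y0) ->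
    Dt l l a y z = 0 -> Dt l l b y z = 0 -> False).
{ intros a b y z Hab Ha Hb Hy Hz Da Db.
  apply (uniq_interval l a b y z Hl Hab); [|exact Da|exact Db].
  intros s Hs. pose proof (Rmin_l d1 (Rabs y0)); pose proof (Rmin_r d1 (Rabs y0)).
  split.
  - intro E; subst y. rewrite Rminus_0_l, Rabs_Ropp in Hy. lra.
  - assert (Rabs (s - x0) < d1).
    { apply Rabs_def1; apply Rabs_def2 in Ha; apply Rabs_def2 in Hb; lra. }
    pose proof (Hd1' s y z ltac:(lra) ltac:(lra) ltac:(lra)) as Q.
    intro E; rewrite E, Rminus_0_l, Rabs_Ropp in Q. lra. }
intros a b y z Ha Hb Hy Hz Da Db.
destruct (Rtotal_order a b) as [Hab|[Hab|Hab]].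
- exfalso; exact (key a b y z Hab Ha Hb Hy Hz Da Db).
- exact Hab.
- exfalso; exact (key b a y z Hab Hb Ha Hy Hz Db Da).
Qed.

Lemma IVT_up f a b v : a <= b -> (forall s, a <= s <= b -> continuity_pt f s) ->
  f a <= v <= f b -> exists c, a <= c <= b /\ f c = v.
Proof.
intros Hab Hc Hv.
destruct (Req_dec (f a) v) as [E|E]; [exists a; split; [lra|exact E]|].
destruct (Req_dec (f b) v) as [E'|E']; [exists b; split; [lra|exact E']|].
assert (a < b) by (destruct (Req_dec a b); [subst; lra|lra]).
destruct (Ranalysis5.IVT_interv (fun s => f s - v) a b) as [c [Hc1 Hc2]].
- intros s Hs. apply continuity_pt_minus; [apply Hc; exact Hs|apply continuity_pt_const; intros ? ?; reflexivity].
- lra.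
- lra.
- lra.
- exists c; split; [exact Hc1|lra].
Qed.

Lemma IVT_down f a b v : a <= b -> (forall s, a <= s <= b -> continuity_pt f s) ->
  f b <= v <= f a -> exists c, a <= c <= b /\ f c = v.
Proof.
intros Hab Hc Hv.
destruct (IVT_up (fun s => - f s) a b (- v) Hab) as [c [Hc1 Hc2]].
- intros s Hs; apply continuity_pt_opp; apply Hc; exact Hs.
- lra.
- exists c; split; [exact Hc1|lra].
Qed.

Lemma extremum_pair f t0 d : d > 0 ->
  (forall s, t0 - d <= s <= t0 + d -> continuity_pt f s) ->
  (forall s, t0 - d <= s <= t0 + d -> f t0 <= f s) ->
  exists t1 t2, t0 - d <= t1 /\ t1 < t2 /\ t2 <= t0 + d /\ f t1 = f t2.
Proof.
intros Hd Hc Hm.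
destruct (Rle_dec (f (t0 - d)) (f (t0 + d))) as [H|H].
- destruct (IVT_up f t0 (t0 + d) (f (t0 - d))) as [c [Hc1 Hc2]].
  + lra.
  + intros s Hs; apply Hc; lra.
  + split; [apply Hm; lra|exact H].
  + exists (t0 - d), c. repeat split; try lra.
- destruct (IVT_down f (t0 - d) t0 (f (t0 + d))) as [c [Hc1 Hc2]].
  + lra.
  + intros s Hs; apply Hc; lra.
  + split; [apply Hm; lra|lra].
  + exists c, (t0 + d). repeat split; try lra.
Qed.

Lemma avoid_list (e : nat -> R) n a b : a < b ->
  exists a' b', a <= a' /\ a' < b' /\ b' <= b /\
    forall i v, (i < n)%nat -> a' < v < b' -> v <> e i.
Proof.
intro Hab. induction n as [|n IH].
- exists a, b. repeat split; try lra. intros; lia.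
- destruct IH as [a' [b' [H1 [H2 [H3 H4]]]]].
  destruct (Rlt_dec a' (e n)) as [Q1|Q1]; [destruct (Rlt_dec (e n) b') as [Q2|Q2]|].
  + exists a', (e n). repeat split; try lra.
    intros i v Hi Hv. destruct (Nat.eq_dec i n) as [->|Hin]; [lra|].
    apply H4; [lia|lra].
  + exists a', b'. repeat split; try lra.
    intros i v Hi Hv. destruct (Nat.eq_dec i n) as [->|Hin]; [lra|].
    apply H4; [lia|lra].
  + exists a', b'. repeat split; try lra.
    intros i v Hi Hv. destruct (Nat.eq_dec i n) as [->|Hin]; [lra|].
    apply H4; [lia|lra].
Qed.

Lemma finite_const (r : R -> R) (e : nat -> R) n :
  (forall t, continuity_pt r t) ->
  (forall t, exists i, (i < n)%nat /\ r t = e i) ->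
  forall s t, r s = r t.
Proof.
intros Hc Hv.
assert (key : forall s t, s <= t -> r s = r t).
{ intros s t Hst. destruct (Req_dec (r s) (r t)) as [E|E]; [exact E|exfalso].
  destruct (Rlt_dec (r s) (r t)) as [L|L].
  - destruct (avoid_list e n (r s) (r t) L) as [a' [b' [H1 [H2 [H3 H4]]]]].
    destruct (IVT_up r s t ((a' + b') / 2) Hst) as [c [Hc1 Hc2]].
    + intros; apply Hc.
    + lra.
    + destruct (Hv c) as [i [Hi Hi']]. apply (H4 i ((a' + b') / 2) Hi); [lra|].
      rewrite <- Hc2; exact Hi'.
  - assert (L' : r t < r s) by lra.
    destruct (avoid_list e n (r t) (r s) L') as [a' [b' [H1 [H2 [H3 H4]]]]].
    destruct (IVT_down r s t ((a' + b') / 2) Hst) as [c [Hc1 Hc2]].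
    + intros; apply Hc.
    + lra.
    + destruct (Hv c) as [i [Hi Hi']]. apply (H4 i ((a' + b') / 2) Hi); [lra|].
      rewrite <- Hc2; exact Hi'. }
intros s t. destruct (Rle_dec s t) as [H|H]; [apply key; exact H|].
symmetry; apply key; lra.
Qed.

Lemma shift_nat (P : R -> Prop) : (forall t, P t <-> P (t + 1)) ->
  forall n t, P t -> P (t - INR n) /\ P (t + INR n).
Proof.
intros HP n. induction n as [|n IH]; intros t Ht.
- simpl. replace (t - 0) with t by ring. replace (t + 0) with t by ring. tauto.
- destruct (IH t Ht) as [H1 H2]. rewrite S_INR. split.
  + apply (proj2 (HP _)). replace (t - (INR n + 1) + 1) with (t - INR n) by ring. exact H1.
  + replace (t + (INR n + 1)) with (t + INR n + 1) by ring. apply (proj1 (HP _)). exact H2.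
Qed.

Lemma shift_Z (P : R -> Prop) : (forall t, P t <-> P (t + 1)) ->
  forall k t, P t -> P (t - IZR k).
Proof.
intros HP k t Ht.
destruct (Z.lt_ge_cases k 0) as [Hk|Hk].
- assert (E : IZR k = - INR (Z.to_nat (- k))).
  { rewrite INR_IZR_INZ, Z2Nat.id by lia. rewrite opp_IZR. ring. }
  rewrite E. replace (t - - INR (Z.to_nat (- k))) with (t + INR (Z.to_nat (- k))) by ring.
  apply (shift_nat P HP); exact Ht.
- assert (E : IZR k = INR (Z.to_nat k)).
  { rewrite INR_IZR_INZ, Z2Nat.id by lia. reflexivity. }
  rewrite E. apply (shift_nat P HP); exact Ht.
Qed.

Lemma frac_range t : 0 <= t - IZR (Int_part t) < 1.
Proof. destruct (base_Int_part t). lra. Qed.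

Lemma to_unit (P : R -> Prop) : (forall t, P t <-> P (t + 1)) ->
  forall t, P t -> exists k, 0 <= t - IZR k < 1 /\ P (t - IZR k).
Proof.
intros HP t Ht. exists (Int_part t). split; [apply frac_range|].
apply shift_Z; assumption.
Qed.

Lemma distinct_mod t1 t2 k1 k2 : t1 < t2 -> t2 - t1 < 1 ->
  t1 - IZR k1 <> t2 - IZR k2.
Proof.
intros H1 H2 E.
assert (E' : IZR (k2 - k1) = t2 - t1) by (rewrite minus_IZR; lra).
assert (0 < k2 - k1)%Z by (apply lt_IZR; lra).
assert (IZR 1 <= IZR (k2 - k1)) by (apply IZR_le; lia).
lra.
Qed.

Lemma periodic_max (q : R -> R) : (forall t, continuity_pt q t) ->
  (forall t, q (t + 1) = q t) -> exists t0, forall t, q t <= q t0.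
Proof.
intros Hc Hp.
destruct (continuity_ab_maj q 0 1) as [M [HM _]]; [lra|intros; apply Hc|].
exists M. intro t.
destruct (to_unit (fun s => q s = q t)) with (t := t) as [k [Hk Hk']].
- intro s. rewrite Hp. tauto.
- reflexivity.
- rewrite <- Hk'. apply HM. lra.
Qed.

Lemma sum_abs_nonneg (u : nat -> R) N : 0 <= sum_f_R0 (fun k => Rabs (u k)) N.
Proof.
induction N as [|N IH]; simpl; [apply Rabs_pos|].
pose proof (Rabs_pos (u (S N))); lra.
Qed.

Lemma term_le_sum (u : nat -> R) N n : (n <= N)%nat -> Rabs (u n) <= sum_f_R0 (fun k => Rabs (u k)) N.
Proof.
induction N as [|N IH]; intro Hn.
- assert (n = 0%nat) by lia; subst; simpl; lra.
- simpl. destruct (Nat.eq_dec n (S N)) as [->|Hne].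
  + pose proof (sum_abs_nonneg u N); lra.
  + pose proof (IH ltac:(lia)). pose proof (Rabs_pos (u (S N))); lra.
Qed.

Lemma cv0_bounded (u : nat -> R) : Un_cv u 0 -> exists M, forall n, Rabs (u n) <= M.
Proof.
intro H. destruct (H 1 ltac:(lra)) as [N HN].
exists (1 + sum_f_R0 (fun k => Rabs (u k)) N). intro n.
destruct (Compare_dec.le_lt_dec n N) as [Hn|Hn].
- pose proof (term_le_sum u N n Hn); lra.
- pose proof (HN n ltac:(lia)) as Q. unfold Rdist in Q. rewrite Rminus_0_r in Q.
  pose proof (sum_abs_nonneg u N); lra.
Qed.

Lemma cont_local_eq (f g : R -> R) t0 r : r > 0 ->
  (forall t, Rabs (t - t0) < r -> f t = g t) -> continuity_pt g t0 -> continuity_pt f t0.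
Proof.
intros Hr Heq Hg eps Heps.
destruct (Hg eps Heps) as [alp [Ha Hb]].
exists (Rmin alp r). split; [apply Rmin_pos; lra|].
intros x [Hx1 Hx2]. simpl in *. unfold Rdist in *.
pose proof (Rmin_l alp r); pose proof (Rmin_r alp r).
rewrite (Heq x) by lra. rewrite (Heq t0) by (rewrite Rminus_diag, Rabs_R0; lra).
apply Hb. split; [exact Hx1|simpl; unfold Rdist; lra].
Qed.

Lemma analytic_cont f : real_analytic f -> forall t, continuity_pt f t.
Proof.
intros Ha t0. destruct (Ha t0) as [a [r [Hr H]]].
set (rho := r / 2).
assert (Hrho : 0 < rho) by (unfold rho; lra).
assert (Hser : forall t, Rabs (t - t0) < r -> is_series (fun n => a n * (t - t0) ^ n) (f t)).
{ intros t Ht. apply is_series_Reals. exact (H t Ht). }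
assert (Hb : exists M, forall n, Rabs (a n * rho ^ n) <= M).
{ apply cv0_bounded. apply is_lim_seq_Reals.
  pose proof (Hser (t0 + rho)) as Q.
  replace (t0 + rho - t0) with rho in Q by ring.
  apply ex_series_lim_0. exists (f (t0 + rho)). apply Q.
  replace (t0 + rho - t0) with rho by ring. rewrite Rabs_right; unfold rho; lra. }
assert (Hrad : Rbar_le rho (CV_radius a)).
{ destruct (CV_radius_bounded a) as [Hub _]. apply Hub. exact Hb. }
apply (cont_local_eq f (fun t => PSeries a (t - t0)) t0 rho Hrho).
- intros t Ht. symmetry. unfold PSeries. apply is_series_unique.
  apply Hser. unfold rho in Ht; lra.
- apply (continuity_pt_comp (fun t => t - t0) (PSeries a)).
  + apply continuity_pt_minus; [apply derivable_continuous_pt; apply derivable_pt_id|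
      apply continuity_pt_const; intros ? ?; reflexivity].
  + rewrite Rminus_diag. apply derivable_continuous_pt. apply ex_derive_Reals_0.
    apply ex_derive_PSeries. rewrite Rabs_R0.
    eapply Rbar_lt_le_trans; [|exact Hrad]. simpl. exact Hrho.
Qed.

Lemma cont_eps f t0 eps : continuity_pt f t0 -> eps > 0 ->
  exists e, e > 0 /\ forall t, Rabs (t - t0) < e -> Rabs (f t - f t0) < eps.
Proof.
intros Hc He. destruct (Hc eps He) as [e [He1 He2]].
exists e; split; [exact He1|]. intros t Ht.
destruct (Req_dec t t0) as [->|Hne].
- rewrite Rminus_diag, Rabs_R0; exact He.
- apply (He2 t). split; [split; [exact I|intro E; apply Hne; symmetry; exact E]|exact Ht].
Qed.

Lemma Fdet_deriv_zero l lam mu (HF : forall s m, Fdet l s m = Dt l l s m 1) : derivable_pt_lim (fun s => Fdet l s mu) lam 0 ->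
  Dp l l lam mu 1 = 0.
Proof.
intro H. apply (uniqueness_limite (fun s => Dt l l s mu 1) lam).
- apply D_deriv.
- eapply dpl_ext; [|reflexivity|exact H]. intro s. exact (HF s mu).
Qed.

Lemma Ghom_deriv_zero l x y z (HG : forall a b c, Ghom l a b c = Dt l l a b c) : derivable_pt_lim (fun s => Ghom l s y z) x 0 ->
  Dp l l x y z = 0.
Proof.
intro H. apply (uniqueness_limite (fun s => Dt l l s y z) x).
- apply D_deriv.
- eapply dpl_ext; [|reflexivity|exact H]. intro s. exact (HG s y z).
Qed.

Lemma Dt_l0 x y z : Dt 0 0 x y z <> 0.
Proof. simpl; lra. Qed.

Lemma affine_local l (u v : R -> R) t0 (HF : forall s m, Fdet l s m = Dt l l s m 1) : (1 <= l)%nat ->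
  (forall t, continuity_pt u t) -> (forall t, continuity_pt v t) ->
  (forall t, u (t + 1) = u t /\ v (t + 1) = v t) ->
  (forall t, Dt l l (u t) (v t) 1 = 0) ->
  (forall s t, 0 <= s < 1 -> 0 <= t < 1 -> s <> t ->
       u s = u t -> v s = v t -> affine_singular l (u s) (v s)) ->
  v t0 <> 0 ->
  (forall eta, eta > 0 -> exists t1 t2, t0 - eta <= t1 /\ t1 < t2 /\ t2 <= t0 + eta /\ v t1 = v t2) ->
  False.
Proof.
intros Hl Cu Cv Hper Hc Hinj Hv0 Hext.
destruct (local_uniq l (u t0) (v t0) 1 Hl Hv0 (Hc t0)) as [d [Hd Hd']].
destruct (cont_eps u t0 d (Cu t0) Hd) as [e1 [He1 He1']].
assert (Hm : Rmin d (Rabs (v t0)) > 0) by (apply Rmin_pos; [lra|apply Rabs_pos_lt; exact Hv0]).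
destruct (cont_eps v t0 _ (Cv t0) Hm) as [e2 [He2 He2']].
set (eta := Rmin (Rmin e1 e2) (1/4) / 2).
assert (Heta : eta > 0).
{ unfold eta. pose proof (Rmin_pos _ (1/4) (Rmin_pos _ _ He1 He2) ltac:(lra)). lra. }
assert (Heta1 : eta < e1 /\ eta < e2 /\ eta < 1/4).
{ unfold eta. pose proof (Rmin_l (Rmin e1 e2) (1/4)). pose proof (Rmin_r (Rmin e1 e2) (1/4)).
  pose proof (Rmin_l e1 e2). pose proof (Rmin_r e1 e2).
  pose proof (Rmin_pos _ (1/4) (Rmin_pos _ _ He1 He2) ltac:(lra)). lra. }
destruct (Hext eta Heta) as [t1 [t2 [H1 [H2 [H3 H4]]]]].
assert (D1 : Rabs (t1 - t0) < e1 /\ Rabs (t1 - t0) < e2).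
{ split; apply Rabs_def1; lra. }
assert (D2 : Rabs (t2 - t0) < e1 /\ Rabs (t2 - t0) < e2).
{ split; apply Rabs_def1; lra. }
pose proof (Rmin_l d (Rabs (v t0))). pose proof (Rmin_r d (Rabs (v t0))).
pose proof (He2' t1 (proj2 D1)) as V1.
assert (Eu : u t1 = u t2).
{ apply (Hd' (u t1) (u t2) (v t1) 1).
  - apply He1'; tauto.
  - apply He1'; tauto.
  - lra.
  - rewrite Rminus_diag, Rabs_R0; lra.
  - apply Hc.
  - rewrite H4; apply Hc. }
assert (Hv1 : v t1 <> 0).
{ intro E; rewrite E, Rminus_0_l, Rabs_Ropp in V1. lra. }
assert (HP : forall t', forall s, (u s = u t' /\ v s = v t') <-> (u (s + 1) = u t' /\ v (s + 1) = v t')).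
{ intros t' s. destruct (Hper s) as [A1 A2]. rewrite A1, A2. tauto. }
destruct (to_unit _ (HP t1) t1 (conj eq_refl eq_refl)) as [k1 [Hk1 [Q1 Q1']]].
destruct (to_unit _ (HP t2) t2 (conj eq_refl eq_refl)) as [k2 [Hk2 [Q2 Q2']]].
assert (Hs : t1 - IZR k1 <> t2 - IZR k2) by (apply distinct_mod; lra).
destruct (Hinj _ _ Hk1 Hk2 Hs) as [_ [Hder _]].
- rewrite Q1, Q2; exact Eu.
- rewrite Q1', Q2'; exact H4.
- apply (Fdet_deriv_zero _ _ _ HF) in Hder.
  assert (Hvs : v (t1 - IZR k1) <> 0) by (rewrite Q1'; exact Hv1).
  destruct (root_simple l _ _ _ Hl Hvs (Hc _)) as [HH _].
  exact (HH Hder).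
Qed.

Lemma affine_part l (HF : forall s m, Fdet l s m = Dt l l s m 1) : ~ exists O : R -> R -> Prop, affine_oval l O.
Proof.
intros [O [u [v [Hu [Hv [Hper [HO [Hc [Hdiff Hinj]]]]]]]]].
pose proof (analytic_cont u Hu) as Cu. pose proof (analytic_cont v Hv) as Cv.
assert (Hc' : forall t, Dt l l (u t) (v t) 1 = 0).
{ intro t. rewrite <- HF. apply Hc. }
destruct l as [|l'].
{ apply (Dt_l0 (u 0) (v 0) 1). apply Hc'. }
assert (Hl : (1 <= S l')%nat) by lia.
assert (Cmv : forall t, continuity_pt (fun s => - v s) t) by (intro t; apply continuity_pt_opp; apply Cv).
destruct (periodic_max v Cv (fun t => proj2 (Hper t))) as [tM HM].
destruct (periodic_max (fun s => - v s) Cmv (fun t => f_equal Ropp (proj2 (Hper t)))) as [tm Hm].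
assert (E1 : v tM = 0).
{ destruct (Req_dec (v tM) 0) as [E|E]; [exact E|exfalso].
  apply (affine_local (S l') u v tM HF Hl Cu Cv Hper Hc' Hinj E).
  intros eta Heta.
  destruct (extremum_pair (fun s => - v s) tM eta Heta) as [t1 [t2 [A1 [A2 [A3 A4]]]]].
  - intros; apply Cmv.
  - intros s _. pose proof (HM s). lra.
  - exists t1, t2. repeat split; try lra. }
assert (E2 : v tm = 0).
{ destruct (Req_dec (v tm) 0) as [E|E]; [exact E|exfalso].
  apply (affine_local (S l') u v tm HF Hl Cu Cv Hper Hc' Hinj E).
  intros eta Heta.
  destruct (extremum_pair v tm eta Heta) as [t1 [t2 [A1 [A2 [A3 A4]]]]].
  - intros; apply Cv.
  - intros s _. pose proof (Hm s). lra.
  - exists t1, t2. repeat split; try lra. }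
assert (V0 : forall t, v t = 0).
{ intro t. pose proof (HM t). pose proof (Hm t). lra. }
assert (Uc : forall s t, u s = u t).
{ apply (finite_const u (fun i => - dgl (S l') i) (S l') Cu).
  intro t. pose proof (Hc' t) as Q. rewrite V0 in Q.
  destruct (Dt_y0 _ _ _ _ Q) as [i [Hi Hi']]. exists i. split; [exact Hi|lra]. }
destruct Hdiff as [s [t Hst]]. apply Hst. rewrite (Uc s t), !V0. reflexivity.
Qed.

Lemma proj_eq_scal x y z k : proj_eq x y z (k * x) (k * y) (k * z).
Proof. unfold proj_eq; repeat split; ring. Qed.

Lemma proj_local l (X Y Z : R -> R) t0 (HG : forall a b c, Ghom l a b c = Dt l l a b c) : (1 <= l)%nat ->
  (forall t, continuity_pt X t) -> (forall t, continuity_pt Y t) -> (forall t, continuity_pt Z t) ->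
  (forall t, Dt l l (X t) (Y t) (Z t) = 0) ->
  (forall t, exists k, 0 <= t - IZR k < 1 /\ exists c, c <> 0 /\
      X (t - IZR k) = c * X t /\ Y (t - IZR k) = c * Y t /\ Z (t - IZR k) = c * Z t) ->
  (forall s t, 0 <= s < 1 -> 0 <= t < 1 -> s <> t ->
       proj_eq (X s) (Y s) (Z s) (X t) (Y t) (Z t) ->
       proj_singular l (X s) (Y s) (Z s)) ->
  Y t0 <> 0 ->
  (forall s, Y s <> 0 -> Z t0 / Y t0 <= Z s / Y s) ->
  False.
Proof.
intros Hl CX CY CZ Hc Hsh Hinj HY0 Hmin.
set (xi := fun s => X s / Y s). set (ze := fun s => Z s / Y s).
assert (Hcurve : forall s, Y s <> 0 -> Dt l l (xi s) 1 (ze s) = 0).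
{ intros s Hs. pose proof (Dt_hom l l (/ Y s) (X s) (Y s) (Z s)) as Q.
  rewrite Hc, Rmult_0_r in Q. unfold xi, ze, Rdiv.
  rewrite (Rmult_comm (X s)), (Rmult_comm (Z s)).
  replace 1 with (/ Y s * Y s) by (field; exact Hs). exact Q. }
destruct (local_uniq l (xi t0) 1 (ze t0) Hl ltac:(lra) (Hcurve t0 HY0)) as [d [Hd Hd']].
destruct (cont_eps Y t0 (Rabs (Y t0)) (CY t0) (Rabs_pos_lt _ HY0)) as [e0 [He0 He0']].
assert (Cxi : continuity_pt xi t0) by (apply continuity_pt_div; auto).
assert (Cze : forall s, Y s <> 0 -> continuity_pt ze s) by (intros; apply continuity_pt_div; auto).
destruct (cont_eps xi t0 d Cxi Hd) as [e1 [He1 He1']].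
destruct (cont_eps ze t0 d (Cze t0 HY0) Hd) as [e2 [He2 He2']].
set (eta := Rmin (Rmin e0 e1) (Rmin e2 (1/4)) / 2).
assert (Heta : eta > 0 /\ eta < e0 /\ eta < e1 /\ eta < e2 /\ eta < 1/4).
{ unfold eta. pose proof (Rmin_l (Rmin e0 e1) (Rmin e2 (1/4))).
  pose proof (Rmin_r (Rmin e0 e1) (Rmin e2 (1/4))).
  pose proof (Rmin_l e0 e1). pose proof (Rmin_r e0 e1).
  pose proof (Rmin_l e2 (1/4)). pose proof (Rmin_r e2 (1/4)).
  pose proof (Rmin_pos _ _ (Rmin_pos _ _ He0 He1) (Rmin_pos e2 (1/4) He2 ltac:(lra))). lra. }
assert (HYn : forall s, Rabs (s - t0) < e0 -> Y s <> 0).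
{ intros s Hs E. pose proof (He0' s Hs) as Q. rewrite E, Rminus_0_l, Rabs_Ropp in Q. lra. }
assert (Hin : forall s, t0 - eta <= s <= t0 + eta -> Rabs (s - t0) < e0 /\ Rabs (s - t0) < e1 /\ Rabs (s - t0) < e2).
{ intros s Hs. repeat split; apply Rabs_def1; lra. }
destruct (extremum_pair ze t0 eta (proj1 Heta)) as [t1 [t2 [A1 [A2 [A3 A4]]]]].
- intros s Hs. apply Cze, HYn. apply Hin; exact Hs.
- intros s Hs. apply Hmin, HYn. apply Hin; exact Hs.
- destruct (Hin t1 ltac:(lra)) as [B1 [B2 B3]].
  destruct (Hin t2 ltac:(lra)) as [C1 [C2 C3]].
  pose proof (HYn t1 B1) as Y1. pose proof (HYn t2 C1) as Y2.
  assert (Exi : xi t1 = xi t2).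
  { apply (Hd' (xi t1) (xi t2) 1 (ze t1)).
    - apply He1'; exact B2.
    - apply He1'; exact C2.
    - rewrite Rminus_diag, Rabs_R0; lra.
    - apply He2'; exact B3.
    - apply Hcurve; exact Y1.
    - rewrite A4; apply Hcurve; exact Y2. }
  set (rho := Y t2 / Y t1).
  assert (EX : X t2 = rho * X t1).
  { unfold xi in Exi. unfold rho.
    replace (X t2) with (X t2 / Y t2 * Y t2) by (field; exact Y2).
    rewrite <- Exi. field. exact Y1. }
  assert (EZ : Z t2 = rho * Z t1).
  { unfold ze in A4. unfold rho.
    replace (Z t2) with (Z t2 / Y t2 * Y t2) by (field; exact Y2).
    rewrite <- A4. field. exact Y1. }
  assert (EY : Y t2 = rho * Y t1) by (unfold rho; field; exact Y1).
  destruct (Hsh t1) as [k1 [Hk1 [c1 [Hc1 [P1 [P2 P3]]]]]].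
  destruct (Hsh t2) as [k2 [Hk2 [c2 [Hc2 [Q1 [Q2 Q3]]]]]].
  assert (Hs : t1 - IZR k1 <> t2 - IZR k2) by (apply distinct_mod; lra).
  destruct (Hinj _ _ Hk1 Hk2 Hs) as [_ [Hder _]].
  + rewrite P1, P2, P3, Q1, Q2, Q3, EX, EY, EZ. unfold proj_eq; repeat split; ring.
  + apply (Ghom_deriv_zero _ _ _ _ HG) in Hder.
    assert (Hys : Y (t1 - IZR k1) <> 0) by (rewrite P2; apply Rmult_integral_contrapositive; tauto).
    destruct (root_simple l _ _ _ Hl Hys (Hc _)) as [HH _].
    exact (HH Hder).
Qed.

Lemma proj_part l (HG : forall a b c, Ghom l a b c = Dt l l a b c) : ~ exists O : R -> R -> R -> Prop, proj_oval l O /\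
       (forall x y z, O x y z -> closed_upper_half x y z).
Proof.
intros [O [[X [Y [Z [HX [HY [HZ [Hnz [Hper [HO [Hc [Hdiff Hinj]]]]]]]]]]] Hup]].
pose proof (analytic_cont X HX) as CX. pose proof (analytic_cont Y HY) as CY.
pose proof (analytic_cont Z HZ) as CZ.
assert (Hc' : forall t, Dt l l (X t) (Y t) (Z t) = 0).
{ intro t. rewrite <- HG. apply Hc. }
destruct l as [|l'].
{ apply (Dt_l0 (X 0) (Y 0) (Z 0)). apply Hc'. }
assert (Hl : (1 <= S l')%nat) by lia.
assert (Hsh : forall t, exists k, 0 <= t - IZR k < 1 /\ exists c, c <> 0 /\
      X (t - IZR k) = c * X t /\ Y (t - IZR k) = c * Y t /\ Z (t - IZR k) = c * Z t).
{ intro t. apply (to_unit (fun s => exists c, c <> 0 /\ X s = c * X t /\ Y s = c * Y t /\ Z s = c * Z t)).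
  - intro s. destruct Hper as [Hp|Hp]; destruct (Hp s) as [E1 [E2 E3]]; rewrite E1, E2, E3;
      split; intros [c [Hc0 [F1 [F2 F3]]]].
    + exists c; repeat split; assumption.
    + exists c; repeat split; assumption.
    + exists (- c). split; [lra|]. rewrite F1, F2, F3. repeat split; ring.
    + exists (- c). split; [lra|].
      replace (- c * X t) with (- (c * X t)) by ring.
      replace (- c * Y t) with (- (c * Y t)) by ring.
      replace (- c * Z t) with (- (c * Z t)) by ring.
      repeat split; lra.
  - exists 1; repeat split; try ring; lra. }
assert (Hyz : forall t, 0 <= Y t * Z t).
{ intro t. destruct (Hsh t) as [k [Hk [c [Hc0 [F1 [F2 F3]]]]]].
  assert (Ht : O (X t) (Y t) (Z t)).
  { apply HO. split; [apply Hnz|]. exists (t - IZR k). split; [exact Hk|].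
    rewrite F1, F2, F3. apply proj_eq_scal. }
  destruct (Hup _ _ _ Ht) as [E|E]; [rewrite E; lra|exact E]. }
assert (Hnz2 : forall t, Y t <> 0 \/ Z t <> 0).
{ intro t. destruct (Req_dec (Y t) 0) as [E1|E1]; [|left; exact E1].
  destruct (Req_dec (Z t) 0) as [E2|E2]; [|right; exact E2].
  exfalso. pose proof (Hc' t) as Q. rewrite E1, E2 in Q.
  destruct (Dt_y0 _ _ _ _ Q) as [i [_ Hi]]. apply (Hnz t). repeat split; try assumption. lra. }
assert (Hden : forall t, Y t * Y t + Z t * Z t > 0).
{ intro t. destruct (Hnz2 t) as [E|E].
  - pose proof (Rsqr_pos_lt _ E). pose proof (Rle_0_sqr (Z t)). unfold Rsqr in *. lra.
  - pose proof (Rsqr_pos_lt _ E). pose proof (Rle_0_sqr (Y t)). unfold Rsqr in *. lra. }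
set (q := fun t => (Y t * Y t) / (Y t * Y t + Z t * Z t)).
assert (Cq : forall t, continuity_pt q t).
{ intro t. unfold q. apply continuity_pt_div.
  - apply continuity_pt_mult; auto.
  - apply continuity_pt_plus; apply continuity_pt_mult; auto.
  - pose proof (Hden t); lra. }
assert (Pq : forall t, q (t + 1) = q t).
{ intro t. unfold q. destruct Hper as [Hp|Hp]; destruct (Hp t) as [E1 [E2 E3]]; rewrite E2, E3;
  [reflexivity| f_equal; ring]. }
destruct (periodic_max q Cq Pq) as [tM HM].
destruct (Req_dec (Y tM) 0) as [EY|EY].
-
  assert (Y0 : forall t, Y t = 0).
  { intro t. pose proof (HM t) as Q. unfold q in Q. rewrite EY in Q.
    replace (0 * 0 / (0 * 0 + Z tM * Z tM)) with 0 in Q by (unfold Rdiv; ring).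
    pose proof (Hden t) as D0.
    assert (Y t * Y t <= 0).
    { apply Rmult_le_reg_r with (/ (Y t * Y t + Z t * Z t)).
      - apply Rinv_0_lt_compat; exact D0.
      - rewrite Rmult_0_l. exact Q. }
    destruct (Req_dec (Y t) 0) as [E|E]; [exact E|].
    pose proof (Rsqr_pos_lt _ E). unfold Rsqr in *. lra. }
  assert (Zn : forall t, Z t <> 0).
  { intro t. destruct (Hnz2 t) as [E|E]; [exfalso; apply E; apply Y0|exact E]. }
  set (r := fun t => X t / Z t).
  assert (Cr : forall t, continuity_pt r t) by (intro t; apply continuity_pt_div; auto).
  assert (Rc : forall s t, r s = r t).
  { apply (finite_const r (fun i => - dgl (S l') i) (S l') Cr).
    intro t. pose proof (Hc' t) as Q. rewrite Y0 in Q.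
    destruct (Dt_y0 _ _ _ _ Q) as [i [Hi Hi']]. exists i. split; [exact Hi|].
    unfold r. pose proof (Zn t). replace (X t) with (- Z t * dgl (S l') i) by lra.
    field. exact (Zn t). }
  destruct Hdiff as [s [t Hst]]. apply Hst.
  unfold proj_eq. rewrite !Y0. repeat split; try ring.
  pose proof (Rc s t) as E. unfold r in E.
  replace (X s) with (X s / Z s * Z s) by (field; exact (Zn s)).
  replace (X t) with (X t / Z t * Z t) by (field; exact (Zn t)).
  rewrite E. ring.
- apply (proj_local (S l') X Y Z tM HG Hl CX CY CZ Hc' Hsh Hinj EY).
  intros s Hs.
  assert (Hqs : forall w, Y w <> 0 -> q w = / (1 + (Z w / Y w) * (Z w / Y w))).
  { intros w Hw. unfold q. pose proof (Hden w).
    assert (1 + Z w / Y w * (Z w / Y w) > 0).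
    { pose proof (Rle_0_sqr (Z w / Y w)). unfold Rsqr in *. lra. }
    field. repeat split; try lra. }
  assert (Hnn : forall w, Y w <> 0 -> 0 <= Z w / Y w).
  { intros w Hw. replace (Z w / Y w) with (Y w * Z w / (Y w * Y w)) by (field; exact Hw).
    apply Rmult_le_pos; [apply Hyz|].
    apply Rlt_le, Rinv_0_lt_compat. pose proof (Rsqr_pos_lt _ Hw). unfold Rsqr in *. lra. }
  pose proof (HM s) as Q. rewrite (Hqs s Hs), (Hqs tM EY) in Q.
  pose proof (Hnn s Hs). pose proof (Hnn tM EY).
  set (a := Z tM / Y tM) in *. set (b := Z s / Y s) in *.
  assert (Hab : 1 + a * a <= 1 + b * b).
  { destruct (Rle_dec (1 + a * a) (1 + b * b)) as [Hh|Hh]; [exact Hh|exfalso].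
    assert (Hlt : 1 + b * b < 1 + a * a) by lra.
    assert (Hp : 0 < (1 + b * b) * (1 + a * a)).
    { pose proof (Rle_0_sqr b); pose proof (Rle_0_sqr a); unfold Rsqr in *.
      apply Rmult_lt_0_compat; lra. }
    pose proof (Rinv_lt_contravar _ _ Hp Hlt). lra. }
  assert (a * a <= b * b) by lra.
  destruct (Rle_dec a b) as [Hh|Hh]; [exact Hh|exfalso].
  assert (b < a) by lra.
  assert (b * b < a * a).
  { apply Rle_lt_trans with (b * a); [apply Rmult_le_compat_l; lra|apply Rmult_lt_compat_r; lra]. }
  lra.
Qed.


Local Close Scope R_scope.
From mathcomp Require Import all_boot all_algebra zify ring.
From mathcomp Require Import Rstruct.
Import GRing.Theory.
Local Open Scope ring_scope.

Definition Tm (R : comNzRingType) n (d e f : nat -> R) : 'M[R]_n := \matrix_(i < n, j < n)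
  (if (j == i :> nat) then d i else if (j == i.+1 :> nat) then e i
   else if (i == j.+1 :> nat) then f i else 0).

Lemma detT2 (R : comNzRingType) n (d e f : nat -> R) : \det (Tm R n.+2 d e f) =
  d n.+1 * \det (Tm R n.+1 d e f) - e n * f n.+1 * \det (Tm R n d e f).
Proof.
rewrite (expand_det_row _ ord_max) big_ord_recr /= big_ord_recr /=.
rewrite big1 ?add0r; last first.
  move=> j _; rewrite !mxE /=.
  have hj := ltn_ord j.
  do 3 (case: eqP => [h|_]; first (exfalso; lia)); by rewrite mul0r.
rewrite !mxE /= !eqxx.
have E1 : (n == n.+1) = false by lia.
have E2 : (n == n.+2) = false by lia.
have E3 : (n.+1 == n.+2) = false by lia.
rewrite ?E1 ?E2 ?E3.
have -> : cofactor (Tm R n.+2 d e f) ord_max ord_max = \det (Tm R n.+1 d e f).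
  rewrite /cofactor /= (_ : (-1) ^+ (n.+1 + n.+1) = 1 :> R); last first.
    by rewrite -signr_odd addnn odd_double.
  rewrite mul1r; congr (\det _); apply/matrixP => i j; rewrite !mxE /=.
  by rewrite /bump (leqNgt n.+1 i) (leqNgt n.+1 j) !ltn_ord /=.
rewrite /cofactor /= (_ : (-1) ^+ (n.+1 + n) = -1 :> R); last first.
  by rewrite -signr_odd addSn addnn /= odd_double.
rewrite (expand_det_col _ ord_max) big_ord_recr /= big1 ?add0r; last first.
  move=> i _; rewrite !mxE /=.
  have hi := ltn_ord i.
  rewrite /bump (leqNgt n.+1 i) ltnS (ltnW hi) leqnn /= !add0n.
  do 3 (case: eqP => [h|_]; first (exfalso; lia)); by rewrite mul0r.
rewrite !mxE /= /bump leqnn ltnn /= .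
case: eqP => [h|_]; first (exfalso; lia).
case: eqP => [_|h]; last (exfalso; lia).
change (e (0 + n)%N) with (e n).
have -> : cofactor (row' ord_max (col' (widen_ord (leqnSn n.+1) ord_max) (Tm R n.+2 d e f)))
      ord_max ord_max = \det (Tm R n d e f).
  rewrite /cofactor /= (_ : (-1) ^+ (n + n) = 1 :> R); last first.
    by rewrite -signr_odd addnn odd_double.
  rewrite mul1r; congr (\det _); apply/matrixP => i j; rewrite !mxE /=.
  have hi := ltn_ord i; have hj := ltn_ord j.
  have Fi : (n <= i)%N = false by lia.
  have Fj : (n <= j)%N = false by lia.
  have Gi : (n < i)%N = false by lia.
  rewrite /bump Fi Fj /= ?add0n ?Fi ?Fj ?Gi /= ?add0n.
  done.
rewrite addrC; congr (_ + _).
by rewrite mulN1r mulrN mulrA [f _ * e _]mulrC.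
Qed.

Local Open Scope ring_scope.
Lemma Ghom_Tm l x y z : Ghom l x y z = \det (Tm _ l
   (fun i => (x + z * (- (i%:R) * (l%:R - i%:R)))%R)
   (fun i => (y * (i.+1)%:R)%R) (fun i => (y * (l%:R - i%:R))%R)).
Proof. reflexivity. Qed.

Lemma Dt_det l x y z k : Dt l k x y z = \det (Tm _ k
   (fun i => (x + z * (- (i%:R) * (l%:R - i%:R)))%R)
   (fun i => (y * (i.+1)%:R)%R) (fun i => (y * (l%:R - i%:R))%R)).
Proof.
suff : Dt l k x y z = \det (Tm _ k
   (fun i => (x + z * (- (i%:R) * (l%:R - i%:R)))%R)
   (fun i => (y * (i.+1)%:R)%R) (fun i => (y * (l%:R - i%:R))%R)) /\
   Dt l k.+1 x y z = \det (Tm _ k.+1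
   (fun i => (x + z * (- (i%:R) * (l%:R - i%:R)))%R)
   (fun i => (y * (i.+1)%:R)%R) (fun i => (y * (l%:R - i%:R))%R)) by case.
elim: k => [|k [IH1 IH2]].
  split; first by rewrite det_mx00.
  rewrite det_mx11 mxE /= /dgl !INRE. reflexivity.
split => //.
rewrite detT2 -IH1 -IH2 /=.
rewrite /dgl /bbt !INRE.
rewrite ?RmultE ?RplusE ?RminusE ?RoppE. ring.
Qed.


Lemma Ghom_Dt l x y z : Ghom l x y z = Dt l l x y z.
Proof. by rewrite Ghom_Tm Dt_det. Qed.

Lemma Fdet_Dt l lam mu : Fdet l lam mu = Dt l l lam mu 1.
Proof.
rewrite Dt_det /Fdet; congr (\det _); apply/matrixP => i j; rewrite !mxE.
case: eqP => [h|h].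
  have -> : i = j by apply/val_inj.
  by rewrite eqxx mulr1n mul1r addrC.
have -> : (i == j) = false by apply/eqP => E; apply: h; rewrite E.
by rewrite mulr0n addr0.
Qed.

Local Close Scope ring_scope.
Local Open Scope R_scope.
Lemma Fdet_Dt1 l lam mu : Fdet l lam mu = Dt l l lam mu 1.
Proof. rewrite Fdet_Dt. exact (f_equal (Dt l l lam mu) R1E). Qed.


Theorem theorem1p8 : forall l : nat,
  (~ exists O : R -> R -> Prop, affine_oval l O) /\
  (~ exists O : R -> R -> R -> Prop, proj_oval l O /\
       (forall x y z, O x y z -> closed_upper_half x y z)).
Proof.
intro l. split.
- apply affine_part. intros s m. exact (Fdet_Dt1 l s m).
- apply proj_part. intros a b c. exact (Ghom_Dt l a b c).
Qed.
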